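(* Let $\lambda_*\in\mathbb C\setminus\{a_1,\dots,a_n\}$. If $(X,P),(\tilde X,\tilde P)\in T^*V_{n,r}$ and a symmetric $r\times r$ matrix $\Gamma=\Gamma(\lambda_* )$ satisfy the discrete Neumann equations $$P=A^{1/2}(\lambda_* )\tilde X-X\Gamma,\qquad \tilde P=-A^{1/2}(\lambda_* )X+\tilde X\Gamma,\qquad \Gamma=\tfrac12\big(\tilde X^TA^{1/2}(\lambda_* )X+X^TA^{1/2}(\lambda_* )\tilde X\big),$$ then for all $\lambda$ the intertwining relation $$\tilde L(\lambda)M(\lambda,\lambda_* )=M(\lambda,\lambda_* )L(\lambda),\qquad M(\lambda,\lambda_* )=\begin{pmatrix}-\Gamma&\mathbf I_r\\ (\lambda-\lambda_* )\mathbf I_r+\Gamma^2&-\Gamma\end{pmatrix}$$ holds. Conversely, up to the action of the group $\mathbb Z_2^n$ of reflections, the intertwining relation implies the discrete Neumann equations: if $(X,P),(\tilde X,\tilde P)\in T^*V_{n,r}$ and a symmetric $\Gamma$ satisfy the intertwining relation for all $\lambda$, then, after applying a suitable element of $\mathbb Z_2^n$ to $(\tilde X,\tilde P)$, the discrete Neumann equations hold.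
   Context: $A=\mathrm{diag}(a_1,\dots,a_n)$ with distinct $a_i$, $A(\lambda)=\lambda\mathbf I_n-A$, and $A^{1/2}(\lambda_* )=\mathrm{diag}(\sqrt{\lambda_*-a_1},\dots,\sqrt{\lambda_*-a_n})$ for a fixed choice of square roots. $T^*V_{n,r}$ is the set of pairs of $n\times r$ matrices $(X,P)$ with $X^TX=\mathbf I_r$, $X^TP+P^TX=0$. $L(\lambda)=\begin{pmatrix} X^TA(\lambda)^{-1}P & X^TA(\lambda)^{-1}X\\ \mathbf I_r-P^TA(\lambda)^{-1}P & -P^TA(\lambda)^{-1}X\end{pmatrix}$ and $\tilde L(\lambda)$ is the same expression in $(\tilde X,\tilde P)$. The group $\mathbb Z_2^n$ acts by changing the sign of the $i$-th row of both matrices of a pair simultaneously, $i=1,\dots,n$. *)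

(* Defs.v *)
From HB Require Import structures.
From mathcomp Require Import all_boot all_order all_algebra all_field.
Set Implicit Arguments. Unset Strict Implicit. Unset Printing Implicit Defensive.
Import Order.TTheory GRing.Theory Num.Theory.
Local Open Scope ring_scope.

Definition Ainv (n : nat) (a : 'I_n -> algC) (lam : algC) : 'M[algC]_n :=
  diag_mx (\row_i (lam - a i)^-1).

(* A^{1/2}(lams) = diag(s_1,...,s_n), s_i a fixed square root of lam_* - a_i *)
Definition Ahalf (n : nat) (s : 'I_n -> algC) : 'M[algC]_n :=
  diag_mx (\row_i s i).

Definition inTV (n r : nat) (X P : 'M[algC]_(n, r)) : Prop :=
  X^T *m X = 1%:M /\ X^T *m P + P^T *m X = 0.

Definition Lax (n r : nat) (a : 'I_n -> algC) (X P : 'M[algC]_(n, r))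
  (lam : algC) : 'M[algC]_(r + r) :=
  block_mx (X^T *m Ainv a lam *m P) (X^T *m Ainv a lam *m X)
           (1%:M - P^T *m Ainv a lam *m P) (- (P^T *m Ainv a lam *m X)).

Definition Mmat (r : nat) (G : 'M[algC]_r) (lam lams : algC) : 'M[algC]_(r + r) :=
  block_mx (- G) 1%:M ((lam - lams)%:M + G *m G) (- G).

Definition neumann (n r : nat) (s : 'I_n -> algC) (X P Xt Pt : 'M[algC]_(n, r))
  (G : 'M[algC]_r) : Prop :=
  [/\ P = Ahalf s *m Xt - X *m G,
      Pt = - (Ahalf s *m X) + Xt *m G
    & G = 2^-1 *: (Xt^T *m Ahalf s *m X + X^T *m Ahalf s *m Xt)].

(* element eps of Z_2^n acting by sign change of rows i with eps i = true *)
Definition signmx (n : nat) (eps : 'I_n -> bool) : 'M[algC]_n :=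
  diag_mx (\row_i (-1) ^+ eps i).

(* Main.v *)
Require Import Defs.
From HB Require Import structures.
From mathcomp Require Import all_boot all_order all_algebra all_field.
Import Order.TTheory GRing.Theory Num.Theory.
Local Open Scope ring_scope.
From mathcomp Require Import ring.
Lemma resid0 n (a : 'I_n -> algC) (ha : injective a) (c : algC) (b : 'I_n -> algC) :
  (forall lam, (forall i, lam != a i) -> c + \sum_i b i * (lam - a i)^-1 = 0) ->
  forall i, b i = 0.
Proof.
move=> hyp.
pose q : {poly algC} := c%:P * \prod_k ('X - (a k)%:P)
   + \sum_i b i *: \prod_(k | k != i) ('X - (a k)%:P).
pose Q := q * \prod_k ('X - (a k)%:P).
have HQ : forall x, Q.[x] = 0.
  move=> x; rewrite hornerM.
  case: (boolP [exists k, x == a k]) => [/existsP [k /eqP ->]|/existsPn H].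
    by rewrite horner_prod (bigD1 k) //= hornerXsubC subrr mul0r mulr0.
  have Hx : forall i, x != a i by move=> i; have := H i.
  suff -> : q.[x] = 0 by rewrite mul0r.
  rewrite -[RHS](mul0r (\prod_k (x - a k))) -(hyp x Hx) mulrDl.
  rewrite /q hornerD hornerM hornerC horner_prod.
  congr (_ + _); first by congr (_ * _); apply: eq_bigr => k _; rewrite hornerXsubC.
  rewrite horner_sum mulr_suml; apply: eq_bigr => i _.
  rewrite -mul_polyC hornerM hornerC horner_prod; under eq_bigr do rewrite hornerXsubC.
  rewrite [in RHS](bigD1 i) //= mulrA -(mulrA (b i)) mulVf ?mulr1 ?subr_eq0 //.
have Q0 : Q = 0.
  apply: (@roots_geq_poly_eq0 _ _ [seq k%:R | k <- iota 0 (size Q)]).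
  - by apply/allP => x _; rewrite /root HQ.
  - rewrite map_inj_uniq ?iota_uniq // => m m' /eqP; rewrite eqr_nat => /eqP.
    done.
  - by rewrite size_map size_iota.
have q0 : q = 0.
  apply/eqP; move/eqP: Q0; rewrite mulf_eq0 => /orP [//|].
  by rewrite (negbTE (monic_neq0 (monic_prod_XsubC _ _ _))).
move=> i; have := congr1 (horner^~ (a i)) q0.
rewrite /q horner0 hornerD hornerM hornerC horner_prod (bigD1 i) //=.
rewrite hornerXsubC subrr mul0r mulr0 add0r horner_sum [\sum_(_ < _) _](bigD1 i) //=.
rewrite [\sum_(j < n | j != i) _]big1 => [|j Hj]; last first.
  rewrite -mul_polyC hornerM hornerC horner_prod (bigD1 i) /=; last by rewrite eq_sym.
  by rewrite hornerXsubC subrr mul0r mulr0.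
rewrite addr0 -mul_polyC hornerM hornerC horner_prod => /eqP; rewrite mulf_eq0 => /orP [/eqP //|].
move/prodf_eq0 => [k Hk]; rewrite hornerXsubC subr_eq0 => /eqP /ha Hik.
by move: Hk; rewrite Hik eqxx.
Qed.
Lemma sum_block (m1 m2 n1 n2 : nat) (I : finType) (F1 : I -> 'M[algC]_(m1,n1))
  (F2 : I -> 'M[algC]_(m1,n2)) (F3 : I -> 'M[algC]_(m2,n1)) (F4 : I -> 'M[algC]_(m2,n2)) :
  \sum_i block_mx (F1 i) (F2 i) (F3 i) (F4 i) =
  block_mx (\sum_i F1 i) (\sum_i F2 i) (\sum_i F3 i) (\sum_i F4 i).
Proof.
rewrite unlock /=; elim: (index_enum I) => /= [|i s ->]; first by rewrite block_mx0.
by rewrite add_block_mx.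
Qed.

Lemma diag_dec (n r : nat) (X P : 'M[algC]_(n,r)) (d : 'I_n -> algC) :
  X^T *m diag_mx (\row_i d i) *m P = \sum_i d i *: ((row i X)^T *m row i P).
Proof.
apply/matrixP => j k; rewrite mul_mx_diag !mxE summxE; apply: eq_bigr => l _.
by rewrite !mxE big_ord1 !mxE -mulrA mulrCA.
Qed.

Definition Ucol {n r : nat} (X P : 'M[algC]_(n,r)) (i : 'I_n) : 'M[algC]_(r + r, 1) :=
  col_mx (row i X)^T (- (row i P)^T).
Definition Vrow {n r : nat} (X P : 'M[algC]_(n,r)) (i : 'I_n) : 'M[algC]_(1, r + r) :=
  row_mx (row i P) (row i X).
Definition Nm (r : nat) : 'M[algC]_(r + r) := block_mx 0 0 1%:M 0.

Lemma Lax_dec (n r : nat) (a : 'I_n -> algC) (X P : 'M[algC]_(n,r)) lam :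
  Lax a X P lam = Nm r + \sum_i (lam - a i)^-1 *: (Ucol X P i *m Vrow X P i).
Proof.
have E i : Ucol X P i *m Vrow X P i = block_mx ((row i X)^T *m row i P)
  ((row i X)^T *m row i X) (-(row i P)^T *m row i P) (-(row i P)^T *m row i X).
  by rewrite /Ucol /Vrow mul_col_row.
rewrite /Lax /Ainv !diag_dec /Nm.
under [in RHS]eq_bigr do rewrite E scale_block_mx.
rewrite sum_block add_block_mx !add0r.
congr block_mx.
- by rewrite -sumrN; congr (_ + _); apply: eq_bigr => i _; rewrite mulNmx scalerN.
- by rewrite -sumrN; apply: eq_bigr => i _; rewrite mulNmx scalerN.
Qed.

Lemma zmod_id (V : zmodType) (x y z w : V) : x + y - (z + w) = y - w + (x - z).
Proof. by rewrite opprD addrACA addrC. Qed.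

Lemma Mmat_shift {r} (G : 'M[algC]_r) lam mu lams :
  Mmat G lam lams = Mmat G mu lams + (lam - mu) *: Nm r.
Proof.
rewrite /Mmat /Nm scale_block_mx add_block_mx !scaler0 !addr0 scalemx1.
congr block_mx; rewrite addrAC -raddfD /=.
by rewrite [mu - lams + _]addrC addrA subrK.
Qed.

Lemma NM r (G : 'M[algC]_r) lam lams : Nm r *m Mmat G lam lams = block_mx 0 0 (-G) 1%:M.
Proof. by rewrite /Nm /Mmat mulmx_block !mul0mx !mul1mx !addr0. Qed.

Lemma MN r (G : 'M[algC]_r) lam lams : Mmat G lam lams *m Nm r = block_mx 1%:M 0 (-G) 0.
Proof. by rewrite /Nm /Mmat mulmx_block !mulmx0 !mulmx1 !add0r. Qed.

Definition Rm {n r : nat} (X P : 'M[algC]_(n,r)) i := Ucol X P i *m Vrow X P i.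

Lemma diff_dec (n r : nat) (a : 'I_n -> algC) (X P Xt Pt : 'M[algC]_(n,r)) (G : 'M[algC]_r)
  lams lam : (forall i, lam != a i) ->
  Lax a Xt Pt lam *m Mmat G lam lams - Mmat G lam lams *m Lax a X P lam =
  (block_mx 0 0 (-G) 1%:M - block_mx 1%:M 0 (-G) 0
     + \sum_i (Rm Xt Pt i *m Nm r - Nm r *m Rm X P i))
  + \sum_i (lam - a i)^-1 *: (Rm Xt Pt i *m Mmat G (a i) lams - Mmat G (a i) lams *m Rm X P i).
Proof.
move=> Hl; rewrite !Lax_dec mulmxDl mulmxDr mulmx_suml mulmx_sumr NM MN.
rewrite opprD addrACA -sumrB -[RHS]addrA -big_split; congr (_ + _); apply: eq_bigr => i _ /=.
rewrite -scalemxAl -scalemxAr (Mmat_shift G lam (a i)) mulmxDr mulmxDl.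
rewrite -!scalemxAr -!scalemxAl !scalerDr !scalerA mulVf ?subr_eq0 // !scale1r.
by rewrite scalerN /Rm zmod_id.
Qed.
Ltac mxsimp := rewrite ?(mul0mx, mulmx0, scaler0, oppr0, add0r, addr0, subr0, sub0r, mulmxBl, mulmxDl, mulmxN, mulNmx, mulmxDr, mulmxBr, mul_scalar_mx, mul_mx_scalar, mulmxA, scaleNr, scalerN, scale1r, mul1mx, mulmx1); rewrite -?scalemxAl -?scalemxAr ?mulmxA !mxE ?scale1r ?mul1r ?mulr1.
Lemma row_fwd r (G : 'M[algC]_r) (hG : G^T = G) (s : algC) (x p y q : 'rV[algC]_r) :
  p = s *: y - x *m G -> q = -(s *: x) + y *m G ->
  let Ma := block_mx (-G) 1%:M (G *m G - (s^+2)%:M) (-G) in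
  col_mx y^T (-q^T) *m row_mx q y *m Ma = Ma *m (col_mx x^T (-p^T) *m row_mx p x).
Proof.
move=> Hp Hq Ma.
have W : Ma *m col_mx x^T (-p^T) = -s *: col_mx y^T (-q^T).
  rewrite /Ma mul_block_col scale_col_mx Hp Hq.
  rewrite !(raddfB, raddfD, raddfN) /= !linearZ /= !trmx_mul hG.
  congr col_mx; apply/matrixP => j k; mxsimp; ring.
have Z : row_mx q y *m Ma = -s *: row_mx p x.
  rewrite /Ma mul_row_block scale_row_mx Hp Hq.
  congr row_mx; apply/matrixP => j k; mxsimp; ring.
by rewrite -mulmxA Z mulmxA W -scalemxAl -scalemxAr.
Qed.
Lemma nz_entry {m k} {A : 'M[algC]_(m,k)} : A != 0 -> exists i j, A i j != 0.
Proof.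
move=> hA; case: (pickP (fun ij : 'I_m * 'I_k => A ij.1 ij.2 != 0)) => [[i j] h|H].
  by exists i, j.
by move/eqP: hA; case; apply/matrixP => i j; rewrite mxE; move/negbFE/eqP: (H (i, j)).
Qed.

Lemma rank1 {m k} {u w : 'cV[algC]_m} {z v : 'rV[algC]_k} :
  u *m z = w *m v -> v != 0 -> w != 0 -> exists beta, w = beta *: u /\ z = beta *: v.
Proof.
move=> E hv hw.
have [i0 [k0 hk0]] := nz_entry hv; rewrite (ord1 i0) in hk0.
have Ecol j : u j 0 * z 0 k0 = w j 0 * v 0 k0.
  by have := congr1 (fun M : 'M[algC]_(m,k) => M j k0) E; rewrite !mxE !big_ord1.
set beta := z 0 k0 / v 0 k0.
have Hw : w = beta *: u.
  apply/matrixP => j l; rewrite (ord1 l) mxE; apply: (mulIf hk0).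
  by rewrite -Ecol mulrAC divfK // mulrC.
have hu : u != 0 by apply: contraNneq hw => u0; rewrite Hw u0 scaler0.
have [j0 [l0 hj0]] := nz_entry hu; rewrite (ord1 l0) in hj0.
exists beta; split => //.
apply/matrixP => i l; rewrite (ord1 i) mxE; apply: (mulfI hj0).
have := congr1 (fun M : 'M[algC]_(m,k) => M j0 l) E; rewrite Hw !mxE !big_ord1 !mxE => ->.
by rewrite mulrCA mulrA.
Qed.

Lemma rank0 {m k} {u : 'cV[algC]_m} {z : 'rV[algC]_k} : u *m z = 0 -> u != 0 -> z = 0.
Proof.
move=> E hu; have [j0 [l0 hj0]] := nz_entry hu; rewrite (ord1 l0) in hj0.
apply/matrixP => i l; rewrite (ord1 i) mxE; apply: (mulfI hj0).
by have := congr1 (fun M : 'M[algC]_(m,k) => M j0 l) E; rewrite !mxE big_ord1 mulr0 => ->.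
Qed.
Lemma lin_combo {m k} (c : algC) {A B C : 'M[algC]_(m,k)} :
  A = B -> (forall j l, C j l = c * (A j l - B j l)) -> C = 0.
Proof. by move=> -> H; apply/matrixP => j l; rewrite H subrr mulr0 mxE. Qed.

Lemma lin_eq {m k} (c : algC) {A B L R : 'M[algC]_(m,k)} :
  A = B -> (forall j l, L j l - R j l = c * (A j l - B j l)) -> L = R.
Proof.
move=> AB H; apply/matrixP => j l; move: (H j l); rewrite AB subrr mulr0.
by move/eqP; rewrite subr_eq0 => /eqP.
Qed.

Lemma row_conv r (G : 'M[algC]_r) (hG : G^T = G) (s : algC) (hs : s != 0)
  (x p y q : 'rV[algC]_r) :
  let Ma := block_mx (-G) 1%:M (G *m G - (s^+2)%:M) (-G) in
  col_mx y^T (-q^T) *m row_mx q y *m Ma = Ma *m (col_mx x^T (-p^T) *m row_mx p x) ->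
  (p = s *: y - x *m G /\ q = -(s *: x) + y *m G) \/
  (p = s *: (-y) - x *m G /\ -q = -(s *: x) + (-y) *m G).
Proof.
move=> Ma E.
have s2 : s ^+ 2 != 0 by rewrite expf_neq0.
case: (eqVneq (row_mx p x) 0) => hV.
  move/eqP: hV; rewrite row_mx_eq0 => /andP [/eqP p0 /eqP x0].
  have E0 : col_mx y^T (-q^T) *m (row_mx q y *m Ma) = 0.
    by rewrite mulmxA E p0 x0 row_mx0 mulmx0 mulmx0.
  have [yq0|yqn0] := eqVneq (col_mx y^T (-q^T)) 0.
    move/eqP: yq0; rewrite col_mx_eq0 oppr_eq0 !trmx_eq0 => /andP [/eqP y0 /eqP q0].
    left; rewrite p0 x0 y0 q0; split; apply/matrixP => j l; mxsimp; ring.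
  have Z := rank0 E0 yqn0.
  exfalso; move/negP: yqn0; apply.
  rewrite /Ma mul_row_block -row_mx0 in Z; case/eq_row_mx: Z => c d.
  have Hq : q = y *m G by apply: (lin_eq 1 d) => j l; mxsimp; ring.
  subst q.
  have hy : s ^+ 2 *: y = 0 by apply: (lin_combo (-1) c) => j l; mxsimp; ring.
  move/eqP: hy; rewrite scaler_eq0 (negbTE s2) /= => /eqP y0.
  by rewrite y0 mul0mx trmx0 oppr0 col_mx0.
have hW : Ma *m col_mx x^T (-p^T) != 0.
  apply/negP => /eqP W0; move/negP: hV; apply.
  rewrite /Ma mul_block_col -col_mx0 in W0; case/eq_col_mx: W0 => a b.
  have Hp : p^T = - (G *m x^T) by apply: (lin_eq (-1) a) => j l; mxsimp; ring.
  have hx : s ^+ 2 *: x^T = 0.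
    by apply: (lin_combo (-1) b) => j l; rewrite Hp; mxsimp; ring.
  move/eqP: hx; rewrite scaler_eq0 (negbTE s2) /= trmx_eq0 => /eqP x0.
  move: Hp; rewrite x0 trmx0 mulmx0 oppr0 => /eqP; rewrite trmx_eq0 => /eqP ->.
  by rewrite row_mx0.
have E' : col_mx y^T (-q^T) *m (row_mx q y *m Ma) =
          (Ma *m col_mx x^T (-p^T)) *m row_mx p x by rewrite mulmxA E mulmxA.
have [beta [Hw Hz]] := rank1 E' hV hW.
rewrite /Ma mul_block_col scale_col_mx in Hw; case/eq_col_mx: Hw => a b.
rewrite /Ma mul_row_block scale_row_mx in Hz; case/eq_row_mx: Hz => c d.
have a' := congr1 trmx a; have b' := congr1 trmx b.
rewrite !(raddfB, raddfD, raddfN) /= !linearZ /= !trmx_mul !trmxK ?hG ?trmx1 in a' b'.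
rewrite ?(raddfB, raddfD, raddfN) /= ?trmx_mul ?hG ?tr_scalar_mx in a' b'.
have Hp : p = - (x *m G) - beta *: y by apply: (lin_eq (-1) a') => j l; mxsimp; ring.
have Hq : q = beta *: x + y *m G by apply: (lin_eq 1 d) => j l; mxsimp; ring.
subst p q.
have hx : (beta ^+ 2 - s ^+ 2) *: x = 0 by apply: (lin_combo 1 b') => j l; mxsimp; ring.
have hy : (beta ^+ 2 - s ^+ 2) *: y = 0 by apply: (lin_combo 1 c) => j l; mxsimp; ring.
have hb : beta ^+ 2 = s ^+ 2.
  apply/eqP; rewrite -subr_eq0; case: (eqVneq x 0) => [x0|xn0].
    move/eqP: hy; rewrite scaler_eq0 => /orP [//|/eqP y0].
    by move: hV; rewrite x0 y0 mul0mx scaler0 oppr0 addr0 row_mx0 eqxx.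
  by move/eqP: hx; rewrite scaler_eq0 (negbTE xn0) orbF.
move/eqP: hb; rewrite eqf_sqr => /orP [/eqP hb|/eqP hb]; subst beta.
  by right; split; apply/matrixP => j l; mxsimp; ring.
by left; split; apply/matrixP => j l; mxsimp; ring.
Qed.
Lemma mx_resid n m k (a : 'I_n -> algC) (ha : injective a) (C : 'M[algC]_(m,k))
  (B : 'I_n -> 'M[algC]_(m,k)) :
  (forall lam, (forall i, lam != a i) -> C + \sum_i (lam - a i)^-1 *: B i = 0) ->
  forall i, B i = 0.
Proof.
move=> H i; apply/matrixP => j l; rewrite mxE.
apply: (@resid0 n a ha (C j l) (fun i => B i j l)) => lam Hl.
have := congr1 (fun M : 'M[algC]_(m,k) => M j l) (H lam Hl).
rewrite !mxE summxE => E; rewrite -[RHS]E; congr (_ + _); apply: eq_bigr => i' _.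
by rewrite mxE mulrC.
Qed.

Lemma Mmat_at {r} (G : 'M[algC]_r) (b lams s : algC) : s ^+ 2 = lams - b ->
  Mmat G b lams = block_mx (-G) 1%:M (G *m G - (s^+2)%:M) (-G).
Proof.
move=> hs; rewrite /Mmat hs addrC; congr block_mx; congr (_ + _).
by rewrite -raddfN /= opprB.
Qed.

Lemma row_diagmul n m (d : 'I_n -> algC) (M : 'M[algC]_(n,m)) i :
  row i (diag_mx (\row_j d j) *m M) = d i *: row i M.
Proof. by rewrite row_mul row_diag_mx -scalemxAl -rowE mxE. Qed.

Lemma sum_rows n r (X P : 'M[algC]_(n,r)) :
  \sum_i (row i X)^T *m row i P = X^T *m P.
Proof.
apply/matrixP => j k; rewrite summxE !mxE; apply: eq_bigr => i _.
by rewrite !mxE big_ord1 !mxE.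
Qed.
Lemma RN {n r} (X P : 'M[algC]_(n,r)) i :
  Rm X P i *m Nm r = block_mx ((row i X)^T *m row i X) 0 (- ((row i P)^T *m row i X)) 0.
Proof.
rewrite /Rm /Ucol /Vrow /Nm -mulmxA mul_row_block !mulmx0 mulmx1 !addr0 add0r.
by rewrite mul_col_row !mulmx0 mulNmx.
Qed.

Lemma NR {n r} (X P : 'M[algC]_(n,r)) i :
  Nm r *m Rm X P i = block_mx 0 0 ((row i X)^T *m row i P) ((row i X)^T *m row i X).
Proof.
rewrite /Rm /Ucol /Vrow /Nm mulmxA mul_block_col !mul0mx mul1mx !addr0.
by rewrite mul_col_row !mul0mx.
Qed.

Lemma row_lin1 n r (s : 'I_n -> algC) (X P Xt : 'M[algC]_(n,r)) (G : 'M[algC]_r) i :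
  P = Ahalf s *m Xt - X *m G -> row i P = s i *: row i Xt - row i X *m G.
Proof. by move=> ->; rewrite raddfB /= row_diagmul row_mul. Qed.

Lemma row_lin2 n r (s : 'I_n -> algC) (X P Xt : 'M[algC]_(n,r)) (G : 'M[algC]_r) i :
  P = - (Ahalf s *m X) + Xt *m G -> row i P = - (s i *: row i X) + row i Xt *m G.
Proof. by move=> ->; rewrite raddfD raddfN /= row_diagmul row_mul. Qed.

Lemma tr_Ahalf n (s : 'I_n -> algC) : (Ahalf s)^T = Ahalf s.
Proof. by rewrite /Ahalf tr_diag_mx. Qed.

Lemma fwd_part n r (a : 'I_n -> algC) (lams : algC) (s : 'I_n -> algC)
  (hs : forall i, s i ^+ 2 = lams - a i)
  (X P Xt Pt : 'M[algC]_(n, r)) (G : 'M[algC]_r) :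
     inTV X P -> inTV Xt Pt -> G^T = G ->
     neumann s X P Xt Pt G ->
     forall lam : algC, (forall i, lam != a i) ->
       Lax a Xt Pt lam *m Mmat G lam lams = Mmat G lam lams *m Lax a X P lam.
Proof.
move=> [hX hXP] [hXt hXtP] hG [HP HPt HG] lam Hl.
apply/eqP; rewrite -subr_eq0 diff_dec //.
have HB i : Rm Xt Pt i *m Mmat G (a i) lams - Mmat G (a i) lams *m Rm X P i = 0.
  apply/eqP; rewrite subr_eq0; apply/eqP.
  rewrite (Mmat_at G (a i) lams (s i) (hs i)) /Rm /Ucol /Vrow.
  by apply: row_fwd => //; [apply: row_lin1 | apply: row_lin2].
rewrite [X in _ + X]big1 => [|i _]; last by rewrite HB scaler0.
rewrite addr0 sumrB.
rewrite (eq_bigr _ (fun i _ => RN Xt Pt i)) (eq_bigr _ (fun i _ => NR X P i)).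
rewrite !sum_block sumrN !sum_rows !big1 //.
have key : Pt^T *m Xt + X^T *m P = 0.
  rewrite HPt HP raddfD raddfN /= !trmx_mul hG tr_Ahalf mulmxDl mulmxBr mulNmx.
  rewrite -!mulmxA hXt mulmx1 [X^T *m (X *m G)]mulmxA hX mul1mx.
  by apply/matrixP => j k; mxsimp; ring.
rewrite !(opp_block_mx, add_block_mx) block_mx_eq0; apply/and4P; split; apply/eqP.
- by rewrite hXt subr0 add0r addNr.
- by rewrite !subr0 addr0.
- by rewrite opprK addNr add0r -opprD key oppr0.
- by rewrite hX add0r subr0 subrr.
Qed.
Lemma row_Ahalf {n m} (s : 'I_n -> algC) (M : 'M[algC]_(n,m)) i :
  row i (Ahalf s *m M) = s i *: row i M.
Proof. by rewrite /Ahalf row_diagmul. Qed.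

Lemma conv_part n r (a : 'I_n -> algC) (ha : injective a) (lams : algC)
  (hlams : forall i, lams != a i) (s : 'I_n -> algC)
  (hs : forall i, s i ^+ 2 = lams - a i)
  (X P Xt Pt : 'M[algC]_(n, r)) (G : 'M[algC]_r) :
     inTV X P -> inTV Xt Pt -> G^T = G ->
     (forall lam : algC, (forall i, lam != a i) ->
       Lax a Xt Pt lam *m Mmat G lam lams = Mmat G lam lams *m Lax a X P lam) ->
     exists eps : 'I_n -> bool,
       neumann s X P (signmx eps *m Xt) (signmx eps *m Pt) G.
Proof.
move=> [hX hXP] [hXt hXtP] hG Hint.
have HB := @mx_resid n (r + r) (r + r) a ha
  (block_mx 0 0 (-G) 1%:M - block_mx 1%:M 0 (-G) 0
     + \sum_i (Rm Xt Pt i *m Nm r - Nm r *m Rm X P i))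
  (fun i => Rm Xt Pt i *m Mmat G (a i) lams - Mmat G (a i) lams *m Rm X P i).
have {}HB i : Rm Xt Pt i *m Mmat G (a i) lams = Mmat G (a i) lams *m Rm X P i.
  apply/eqP; rewrite -subr_eq0; apply/eqP; apply: HB => lam Hl.
  by rewrite -diff_dec // Hint // subrr.
have hsn i : s i != 0.
  by apply/negP => /eqP s0; move: (hs i); rewrite s0 expr0n /= => /eqP; rewrite eq_sym subr_eq0 (negbTE (hlams i)).
pose eps i := ~~ ((row i P == s i *: row i Xt - row i X *m G) &&
                  (row i Pt == - (s i *: row i X) + row i Xt *m G)).
exists eps.
have Hrow i : row i P = s i *: row i (signmx eps *m Xt) - row i X *m G /\
   row i (signmx eps *m Pt) = - (s i *: row i X) + row i (signmx eps *m Xt) *m G.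
  rewrite /signmx !row_diagmul.
  have := HB i; rewrite (Mmat_at G (a i) lams (s i) (hs i)) /Rm /Ucol /Vrow => E.
  have RC := @row_conv _ G hG (s i) (hsn i) _ _ _ _ E.
  case Hc: ((row i P == s i *: row i Xt - row i X *m G) &&
                  (row i Pt == - (s i *: row i X) + row i Xt *m G)).
  - move/andP: (Hc) => [/eqP h1 /eqP h2].
    have -> : eps i = false by rewrite /eps Hc.
    by rewrite expr0 !scale1r.
  - have -> : eps i = true by rewrite /eps Hc.
    rewrite expr1 !scaleN1r.
    case: RC => [[h1 h2]|[h1 h2]]; last by split.
    by move: Hc; rewrite h1 h2 !eqxx.
have HP : P = Ahalf s *m (signmx eps *m Xt) - X *m G.
  by apply/row_matrixP => i; rewrite raddfB /= (row_Ahalf s) [row i (X *m G)]row_mul (Hrow i).1.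
have HPt : signmx eps *m Pt = - (Ahalf s *m X) + (signmx eps *m Xt) *m G.
  by apply/row_matrixP => i; rewrite (Hrow i).2 raddfD raddfN /= (row_Ahalf s X) [row i (_ *m G)]row_mul.
split => //.
move: (signmx eps *m Xt) HP => Y HP.
move: hXP; rewrite HP [(_ - _)^T]raddfB /= !trmx_mul hG tr_Ahalf mulmxBl mulmxBr.
rewrite [X^T *m (X *m G)]mulmxA hX mul1mx -[G *m X^T *m X]mulmxA hX mulmx1 => E.
apply: (lin_eq (- 2^-1) E) => j k; mxsimp.
by field.
Qed.

Theorem theorem6p2 (n r : nat) (a : 'I_n -> algC) (ha : injective a)
  (lams : algC) (hlams : forall i, lams != a i)
  (s : 'I_n -> algC) (hs : forall i, s i ^+ 2 = lams - a i) :
  (forall (X P Xt Pt : 'M[algC]_(n, r)) (G : 'M[algC]_r),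
     inTV X P -> inTV Xt Pt -> G^T = G ->
     neumann s X P Xt Pt G ->
     forall lam : algC, (forall i, lam != a i) ->
       Lax a Xt Pt lam *m Mmat G lam lams = Mmat G lam lams *m Lax a X P lam)
  /\
  (forall (X P Xt Pt : 'M[algC]_(n, r)) (G : 'M[algC]_r),
     inTV X P -> inTV Xt Pt -> G^T = G ->
     (forall lam : algC, (forall i, lam != a i) ->
       Lax a Xt Pt lam *m Mmat G lam lams = Mmat G lam lams *m Lax a X P lam) ->
     exists eps : 'I_n -> bool,
       neumann s X P (signmx eps *m Xt) (signmx eps *m Pt) G).
Proof.
split.
- by move=> X P Xt Pt G; apply: fwd_part.
- by move=> X P Xt Pt G; apply: conv_part.
Qed.
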